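(* Let $\tilde S\subseteq\mathfrak P$. Suppose $\tilde O\subseteq\mathcal C_{\mathfrak P}(\tilde S)$ is an unimprovable set with respect to $\tilde S$ that extends to $\tilde X:=\{o\}\cup\tilde X'\subseteq\mathcal C_{\mathfrak P}(\tilde S)$, and suppose there exists $h\in\mathcal C_{\mathfrak P}(\tilde S)$ of weight $\omega_{\tilde S}(o)$ that anticommutes with $o$ but commutes with every operator in $\tilde X'$. Then $\tilde O\cup\{o\}$ is an unimprovable set with respect to $\tilde S$ that extends to $\tilde X'$.
   Context: $\mathfrak P$ is the group of $N$-qubit Pauli operators modulo phases; $\mathcal C_{\mathfrak P}(\tilde S)$ is the centralizer of $\tilde S$; $\Pi(T)$ is the product of the elements of a finite set $T$. The weight of a Pauli operator is its number of non-identity tensor factors. For $l\in\mathcal C_{\mathfrak P}(\tilde S)$, $\omega_{\tilde S}(l)$ is the minimum weight of an $e\in\mathcal C_{\mathfrak P}(\tilde S)$ anticommuting with $l$ ($+\infty$ if none). A set $\tilde O\subseteq\mathcal C_{\mathfrak P}(\tilde S)$ is unimprovable with respect to $\tilde S$ if $\omega_{\tilde S}(\Pi(\tilde Y))=\min_{y\in\tilde Y}\omega_{\tilde S}(y)$ for every $\tilde Y\subseteq\tilde O$; it extends to a set $\tilde Q$ if for every $\tilde Y\subseteq\tilde O\cup\tilde Q$ with $\tilde Y\cap\tilde O\neq\emptyset$, $\omega_{\tilde S}(\Pi(\tilde Y))\le\min_{y\in\tilde Y\cap\tilde O}\omega_{\tilde S}(y)$. *)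

(* Defs.v *)
(* N-qubit Pauli operators modulo phases, encoded by their
   (x,z) bits on each qubit: I=(0,0), X=(1,0), Z=(0,1), Y=(1,1). *)
From mathcomp Require Import all_boot.
Set Implicit Arguments. Unset Strict Implicit. Unset Printing Implicit Defensive.

Definition Pauli (N : nat) : finType := {ffun 'I_N -> bool * bool}.

Section Pauli.
Variable N : nat.

Definition pmul (p q : Pauli N) : Pauli N :=
  [ffun i => (xorb (p i).1 (q i).1, xorb (p i).2 (q i).2)].
Definition pid : Pauli N := [ffun => (false, false)].

Definition pprod (T : {set Pauli N}) : Pauli N := \big[pmul/pid]_(t in T) t.

Definition weight (p : Pauli N) : nat := #|[set i | p i != (false, false)]|.

(* commutation: symplectic inner product is even *)
Definition commuteb (p q : Pauli N) : bool :=
  ~~ odd (\sum_(i < N) (((p i).1 && (q i).2) + ((p i).2 && (q i).1))).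

Definition centralizer (S : {set Pauli N}) : {set Pauli N} :=
  [set p | [forall s in S, commuteb p s]].

(* option nat with None = +infinity *)
Definition omin (a b : option nat) : option nat :=
  match a, b with
  | None, _ => b
  | _, None => a
  | Some x, Some y => Some (minn x y)
  end.
Definition ole (a b : option nat) : bool :=
  match a, b with
  | _, None => true
  | None, Some _ => false
  | Some x, Some y => x <= y
  end.

Definition omega (S : {set Pauli N}) (l : Pauli N) : option nat :=
  \big[omin/None]_(e in centralizer S | ~~ commuteb e l) Some (weight e).

Definition omega_min (S Y : {set Pauli N}) : option nat :=
  \big[omin/None]_(y in Y) omega S y.

Definition unimprovable (S O : {set Pauli N}) : Prop :=
  O \subset centralizer S /\
  forall Y : {set Pauli N}, Y \subset O -> omega S (pprod Y) = omega_min S Y.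

Definition extends_to (S O Q : {set Pauli N}) : Prop :=
  forall Y : {set Pauli N}, Y \subset O :|: Q -> Y :&: O != set0 ->
    ole (omega S (pprod Y)) (omega_min S (Y :&: O)).

End Pauli.

(* Main.v *)
From HB Require Import structures.
Require Import Defs.
From mathcomp Require Import all_boot.
Set Implicit Arguments. Unset Strict Implicit. Unset Printing Implicit Defensive.

Lemma pmulA N : associative (@pmul N).
Proof. by move=> a b c; apply/ffunP=> i; rewrite !ffunE /=; case: (a i) (b i) (c i) => [[] []] [[] []] [[] []]. Qed.
Lemma pmulC N : commutative (@pmul N).
Proof. by move=> a b; apply/ffunP=> i; rewrite !ffunE /=; case: (a i) (b i) => [[] []] [[] []]. Qed.
Lemma pmul1m N : left_id (pid N) (@pmul N).
Proof. by move=> a; apply/ffunP=> i; rewrite !ffunE /=; case: (a i). Qed.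
HB.instance Definition _ N := Monoid.isComLaw.Build (Pauli N) (pid N) (@pmul N) (@pmulA N) (@pmulC N) (@pmul1m N).

Lemma ominA : associative omin.
Proof. by case=> [a|] [b|] [c|] //=; rewrite minnA. Qed.
Lemma ominC : commutative omin.
Proof. by case=> [a|] [b|] //=; rewrite minnC. Qed.
Lemma omin1m : left_id None omin.
Proof. by case. Qed.
HB.instance Definition _ := Monoid.isComLaw.Build (option nat) None omin ominA ominC omin1m.

Lemma commuteb_mul N (e a b : Pauli N) :
  commuteb e (pmul a b) = (commuteb e a == commuteb e b).
Proof.
rewrite /commuteb !(big_morph odd oddD (erefl : odd 0 = false)).
rewrite (eq_bigr (fun i => addb (odd (((e i).1 && (a i).2) + ((e i).2 && (a i).1)))
                  (odd (((e i).1 && (b i).2) + ((e i).2 && (b i).1))))); last first.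
  by move=> i _; rewrite !ffunE /=; case: (e i) (a i) (b i) => [[] []] [[] []] [[] []].
rewrite big_split /=.
by case: (\big[_/_]_(i < N) _); case: (\big[_/_]_(i < N) _).
Qed.

Lemma commuteb_pid N (e : Pauli N) : commuteb e (pid N).
Proof.
rewrite /commuteb big1 // => i _; rewrite ffunE /=; by case: (e i) => [[] []].
Qed.

Lemma commute_prod N (e : Pauli N) (Y : {set Pauli N}) :
  (forall y, y \in Y -> commuteb e y) -> commuteb e (pprod Y).
Proof.
move=> H; rewrite /pprod; apply: (big_ind (commuteb e)).
- exact: commuteb_pid.
- by move=> x y hx hy; rewrite commuteb_mul hx hy.
- exact: H.
Qed.

Lemma ole_refl a : ole a a.
Proof. by case: a => //= n; rewrite leqnn. Qed.
Lemma ole_trans a b c : ole a b -> ole b c -> ole a c.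
Proof. by case: a b c => [a|] [b|] [c|] //=; apply: leq_trans. Qed.
Lemma ole_total a b : ~~ ole a b -> ole b a.
Proof. case: a => [a|]; case: b => [b|] //= h; by apply: ltnW; rewrite ltnNge. Qed.
Lemma ole_ominl a b : ole (omin a b) a.
Proof. by case: a b => [a|] [b|] //=; rewrite ?leqnn // geq_minl. Qed.
Lemma ole_ominr a b : ole (omin a b) b.
Proof. by case: a b => [a|] [b|] //=; rewrite ?leqnn // geq_minr. Qed.
Lemma ole_omin c a b : ole c a -> ole c b -> ole c (omin a b).
Proof. by case: c a b => [c|] [a|] [b|] //= h1 h2; rewrite leq_min h1 h2. Qed.
Lemma ole_None a : ole a None.
Proof. by case: a. Qed.
Lemma ole_antisym a b : ole a b -> ole b a -> a = b.
Proof. by case: a b => [a|] [b|] //= h1 h2; congr Some; apply/eqP; rewrite eqn_leq h1 h2. Qed.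

Lemma big_le (I : finType) (P : pred I) (F : I -> option nat) j :
  P j -> ole (\big[omin/None]_(i | P i) F i) (F j).
Proof. by move=> Pj; rewrite (bigD1 j) //= ole_ominl. Qed.

Lemma big_ge (I : finType) (P : pred I) (F : I -> option nat) c :
  (forall j, P j -> ole c (F j)) -> ole c (\big[omin/None]_(i | P i) F i).
Proof.
move=> H; apply: (big_ind (ole c)); first exact: ole_None.
  exact: ole_omin.
exact: H.
Qed.

Lemma omega_le N (S : {set Pauli N}) l e :
  e \in centralizer S -> ~~ commuteb e l -> ole (omega S l) (Some (weight e)).
Proof. by move=> h1 h2; rewrite /omega; apply: (big_le (fun e => Some (weight e))); rewrite h1. Qed.

Lemma omega_min_le N (S Y : {set Pauli N}) y :
  y \in Y -> ole (omega_min S Y) (omega S y).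
Proof. by move=> h; apply: (big_le (omega S)). Qed.

Lemma lower_bound N (S Y : {set Pauli N}) :
  ole (omega_min S Y) (omega S (pprod Y)).
Proof.
apply: big_ge => e /andP [eC ne].
have : exists2 y, y \in Y & ~~ commuteb e y.
  apply/exists_inP; apply: contraR ne => /exists_inPn H.
  by apply: commute_prod => y /H /negPn.
case=> y yY ey; apply: ole_trans (omega_min_le S yY) (omega_le eC ey).
Qed.

Lemma omega_min0 N (S : {set Pauli N}) : omega_min S set0 = None.
Proof. by rewrite /omega_min big_set0. Qed.

Theorem lemma8 (N : nat) (S O X' : {set Pauli N}) (o h : Pauli N) :
  unimprovable S O ->
  o |: X' \subset centralizer S ->
  extends_to S O (o |: X') ->
  h \in centralizer S ->
  Some (weight h) = omega S o ->
  ~~ commuteb h o ->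
  (forall x, x \in X' -> commuteb h x) ->
  unimprovable S (O :|: [set o]) /\ extends_to S (O :|: [set o]) X'.
Proof.
move=> [OC HO] XC Hext hC hw hao hX.
have G : forall Y : {set Pauli N}, Y \subset O :|: (o |: X') -> o \in Y ->
    ~~ ole (omega_min S (Y :&: O)) (omega S o) ->
    ole (omega S (pprod Y)) (omega S o).
  move=> Y HY oY Hc.
  have hcomm : forall y, y \in Y :\ o -> commuteb h y.
    move=> y; rewrite !inE => /andP [yo yY].
    case: (boolP (y \in O)) => yO.
      apply: contraR Hc => ny.
      apply: ole_trans (omega_min_le S (_ : y \in Y :&: O)) _; first by rewrite inE yY.
      by rewrite -hw; apply: omega_le.
    apply: hX; move: (subsetP HY y yY); rewrite !inE (negbTE yO) (negbTE yo) /=.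
    done.
  rewrite -hw; apply: omega_le => //.
  rewrite /pprod (big_setD1 o oY) /= -/(pprod (Y :\ o)) commuteb_mul.
  by rewrite (commute_prod hcomm) (negbTE hao).
have core : forall Y : {set Pauli N}, Y \subset O :|: (o |: X') ->
    ole (omega S (pprod Y)) (omega_min S (Y :&: (O :|: [set o]))).
  move=> Y HY.
  apply: big_ge => z; rewrite !inE => /andP [zY zOo].
  have zmin : z \in O -> ole (omega_min S (Y :&: O)) (omega S z).
    by move=> zO; apply: omega_min_le; rewrite inE zY zO.
  case: (boolP (ole (omega_min S (Y :&: O)) (omega S o))) => Hc.
    have ne : Y :&: O != set0.
      by apply: contraTneq Hc => ->; rewrite omega_min0 -hw.
    have Hb := Hext Y HY ne.
    case/orP: zOo => [zO | /eqP ->].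
      exact: ole_trans Hb (zmin zO).
    exact: ole_trans Hb Hc.
  case: (boolP (o \in Y)) => oY.
    have Gb := G Y HY oY Hc.
    case/orP: zOo => [zO | /eqP ->] //.
    exact: ole_trans Gb (ole_trans (ole_total Hc) (zmin zO)).
  have zO : z \in O.
    case/orP: zOo => // /eqP zo; by rewrite -zo zY in oY.
  have ne : Y :&: O != set0 by apply/set0Pn; exists z; rewrite inE zY zO.
  exact: ole_trans (Hext Y HY ne) (zmin zO).
split.
  split.
    apply/subsetP => y; rewrite in_setU in_set1 => /orP [yO | /eqP ->].
      exact: (subsetP OC _ yO).
    by apply: (subsetP XC); rewrite in_setU1 eqxx.
  move=> Y HY; apply: ole_antisym; last exact: lower_bound.
  have HY' : Y \subset O :|: (o |: X').
    apply: (subset_trans HY); apply/subsetP => y; rewrite !inE => /orP [->|->] //.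
    by rewrite orbT.
  by have := core Y HY'; rewrite (setIidPl HY).
move=> Y HY _.
apply: core; apply: (subset_trans HY); apply/subsetP => y; rewrite !inE.
by rewrite orbA.
Qed.
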